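(* Let $F$ be a $2$-edge-coloured graph on $n\ge 2$ vertices which contains no alternating cycle. Then there is an ordering $v_1,\dots,v_n$ of $V(F)$ such that for every $1\le i\le n$ there is a colour $c_i\in\{\text{red},\text{blue}\}$ for which $v_i$ has fewer than $\log_2 n$ neighbours $v_j$ with $j>i$ such that the edge $\{v_i,v_j\}$ has colour $c_i$.
   Context: A $2$-edge-coloured graph is a finite simple graph each of whose edges is coloured red or blue. An alternating cycle is a cycle whose consecutive edges have alternating colours. *)

(* Defs.v *)
From mathcomp Require Import all_boot.
Set Implicit Arguments. Unset Strict Implicit. Unset Printing Implicit Defensive.

(* The edge
   set is red ∪ blue; each edge gets exactly one colour. *)
Definition two_edge_coloured (T : finType) (red blue : rel T) : Prop :=
  [/\ symmetric red, symmetric blue, irreflexive red, irreflexive blue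
    & forall x y, ~~ (red x y && blue x y)].

Definition colrel (T : finType) (red blue : rel T) (c : bool) : rel T :=
  if c then red else blue.

Definition alternating_cycle (T : finType) (red blue : rel T) (s : seq T) : Prop :=
  let k := size s in
  match s with
  | [::] => False
  | x0 :: _ =>
    [/\ 3 <= k, uniq s &
      forall i, i < k ->
        let a := nth x0 s i in
        let b := nth x0 s ((i + 1) %% k) in
        let c := nth x0 s ((i + 2) %% k) in
        (red a b && blue b c) || (blue a b && red b c)]
  end.

Definition has_alternating_cycle (T : finType) (red blue : rel T) : Prop :=
  exists s : seq T, alternating_cycle red blue s.

(* For naturals m and n >= 1:  m < log2 n  <->  2 ^ m < n. *)
Definition lt_log2 (m n : nat) : bool := 2 ^ m < n.

(* Main.v *)
Require Import Defs.
From mathcomp Require Import all_boot.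
From mathcomp Require Import zify.
Set Implicit Arguments. Unset Strict Implicit. Unset Printing Implicit Defensive.

Section Kotzig.
Variable U : finType.
Variable mu : U -> U.
Hypothesis muK : involutive mu.
Hypothesis mu_nfix : forall x, mu x != x.

Definition UQ (s : seq U) := uniq s && all (fun x => mu x \notin s) s.

Definition Rr (E : rel U) : rel U := fun x y => E (mu x) y.

Definition altc (V : {set U}) (E : rel U) (s : seq U) :=
  [&& 1 < size s, UQ s, all (mem V) s & cycle (Rr E) s].

Definition PM (V : {set U}) (E : rel U) :=
  [/\ forall x y, E x y = E y x, forall x, ~~ E x x,
      forall x, x \in V -> mu x \in V & forall x, x \in V -> E x (mu x)].

Definition bridge (V : {set U}) (E : rel U) (y : U) (A : {set U}) :=
  [/\ y \in A, A \subset V, mu y \notin A &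
      forall u w, u \in A -> w \in V -> w \notin A -> E u w -> u = y /\ w = mu y].

Lemma UQ_sub s1 s2 : uniq s1 -> {subset s1 <= s2} -> UQ s2 -> UQ s1.
Proof.
move=> u1 sub /andP[_ /allP H]; apply/andP; split=> //; apply/allP=> x xs.
apply/negP=> mx; have := H x (sub x xs); by rewrite (sub _ mx).
Qed.

Lemma UQ_cons x s : UQ (x :: s) = [&& x \notin s, mu x \notin s & UQ s].
Proof.
rewrite /UQ /= !inE (negbTE (mu_nfix x)) /=.
apply/idP/idP.
- case/and3P=> [/andP[xs us] mxs /allP H]; rewrite xs mxs us /=.
  apply/allP=> y ys; have := H y ys; by rewrite inE negb_or => /andP[].
- case/and3P=> xs mxs /andP[us /allP H]; rewrite xs us mxs /=.
  apply/allP=> y ys; rewrite inE negb_or H // andbT.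
  by apply/eqP=> e; move: mxs; rewrite -e muK ys.
Qed.

Lemma UQ_rcons x s : UQ (rcons s x) = [&& x \notin s, mu x \notin s & UQ s].
Proof.
rewrite /UQ rcons_uniq all_rcons !mem_rcons !inE (negbTE (mu_nfix x)) /=.
apply/idP/idP.
- case/and3P=> [/andP[xs us] mxs /allP H]; rewrite xs mxs us /=.
  apply/allP=> y ys; have := H y ys; by rewrite mem_rcons inE negb_or => /andP[].
- case/and3P=> xs mxs /andP[us /allP H]; rewrite xs us mxs /=.
  apply/allP=> y ys; rewrite mem_rcons inE negb_or H // andbT.
  by apply/eqP=> e; move: mxs; rewrite -e muK ys.
Qed.

Lemma UQ_rot k s : UQ (rot k s) = UQ s.
Proof.
rewrite /UQ rot_uniq; congr (_ && _).
apply/allP/allP=> H x; [rewrite -(mem_rot k) => /H; by rewrite mem_rot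
                       | rewrite mem_rot => /H; by rewrite -(mem_rot k)].
Qed.

Lemma UQ_cat s1 s2 : UQ s1 -> UQ s2 ->
  (forall x, x \in s1 -> (x \notin s2) && (mu x \notin s2)) -> UQ (s1 ++ s2).
Proof.
move=> /andP[u1 /allP a1] /andP[u2 /allP a2] H.
apply/andP; split.
  rewrite cat_uniq u1 u2 /= andbT; apply/hasPn=> x xs2; apply/negP=> xs1.
  by case/andP: (H x xs1); rewrite xs2.
apply/allP=> x; rewrite mem_cat => /orP[xs|xs]; rewrite mem_cat negb_or.
  by rewrite a1 //; case/andP: (H x xs).
rewrite a2 // andbT; apply/negP=> mxs; case/andP: (H _ mxs)=> _; by rewrite muK xs.
Qed.

Lemma Rr_rev E : (forall x y, E x y = E y x) -> forall x y, Rr E x y = Rr E (mu y) (mu x).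
Proof. by move=> sym x y; rewrite /Rr muK sym. Qed.

Lemma path_rev E : (forall x y, E x y = E y x) -> forall x s y,
  path (Rr E) x (rcons s y) -> path (Rr E) (mu y) (rcons (map mu (rev s)) (mu x)).
Proof.
move=> sym x s; elim: s x => [|z s IH] x y /=.
  by rewrite !andbT Rr_rev.
case/andP=> h1 h2.
rewrite rev_cons map_rcons rcons_path last_rcons (IH z y h2) /=.
by rewrite -Rr_rev.
Qed.

Lemma UQ_rev s : UQ s -> UQ (map mu (rev s)).
Proof.
move=> /andP[us /allP H]; apply/andP; split.
  by rewrite map_inj_uniq ?rev_uniq //; exact: (can_inj muK).
apply/allP=> x /mapP[y]; rewrite mem_rev => ys ->.
rewrite (mem_map (can_inj muK)) mem_rev.
by apply/negP=> mxs; have := H _ ys; rewrite mxs.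
Qed.


Lemma altc_rev V E s : PM V E -> altc V E s -> altc V E (map mu (rev s)).
Proof.
case=> sym _ muV _ /and4P[sz uq aV cy]; apply/and4P; split.
- by rewrite size_map size_rev.
- exact: UQ_rev.
- apply/allP=> x /mapP[y]; rewrite mem_rev => ys ->; apply: muV; exact: (allP aV).
case: s sz uq aV cy => [//|x t] _ _ _ /=.
move=> /(path_rev sym) H.
by rewrite rev_cons map_rcons -rot1_cons rot_cycle.
Qed.

Lemma altc_rot V E k s : altc V E (rot k s) = altc V E s.
Proof.
rewrite /altc size_rot UQ_rot rot_cycle; congr [&& _, _, _ & _].
by apply/allP/allP=> H x; [rewrite -(mem_rot k) | rewrite mem_rot]; apply: H.
Qed.

Definition blos (V : {set U}) (E : rel U) a bl :=
  [&& bl != [::], UQ (a :: bl), all (mem V) (a :: bl) & path (Rr E) a (rcons bl (mu a))].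

Definition Bset (bl : seq U) := [set x | (x \in bl) || (mu x \in bl)].

Lemma inBset bl x : (x \in Bset bl) = (x \in bl) || (mu x \in bl).
Proof. by rewrite /Bset inE. Qed.

Lemma blos_rev V E a bl : PM V E -> blos V E a bl -> blos V E a (map mu (rev bl)).
Proof.
case=> sym _ muV _ /and4P[ne uq aV pa]; apply/and4P; split.
- by rewrite -size_eq0 size_map size_rev size_eq0.
- move: uq; rewrite !UQ_cons => /and3P[abl mabl ub].
  rewrite (UQ_rev ub) andbT.
  rewrite (mem_map (can_inj muK)) mem_rev abl andbT.
  apply/mapP=> [[y]]; rewrite mem_rev => ys ay.
  by move: mabl; rewrite ay muK ys.
- move: aV => /= /andP[-> /allP bV] /=; apply/allP=> x /mapP[y]; rewrite mem_rev => ys ->.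
  exact/muV/bV.
- by have := path_rev sym pa; rewrite muK.
Qed.

Lemma BP_in0 V E a bl w : blos V E a bl -> w \in bl ->
  exists p, [/\ UQ (w :: p), {subset w :: p <= bl} & path (Rr E) w (rcons p (mu a))].
Proof.
case/and4P=> _ uq _ pa /splitPr def; move: def uq pa => [p1 p2] uq pa.
exists p2; split.
- apply: (UQ_sub _ _ uq).
  + move: uq; rewrite UQ_cons => /and3P[_ _ /andP[u _]].
    by move: u; rewrite cat_uniq => /and3P[_ _ ->].
  + by move=> x xs; rewrite inE mem_cat xs !orbT.
- by move=> x xs; rewrite mem_cat xs orbT.
- move: pa; rewrite rcons_cat cat_path => /andP[_] /=.
  by case/andP.
Qed.

Lemma Bset_notin V E a bl : blos V E a bl -> (a \notin Bset bl) && (mu a \notin Bset bl).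
Proof.
case/and4P=> _; rewrite UQ_cons => /and3P[abl mabl _] _ _.
by rewrite !inBset muK negb_or abl mabl negb_or mabl abl.
Qed.

Lemma Bset_V V E a bl : PM V E -> blos V E a bl -> Bset bl \subset V.
Proof.
case=> _ _ muV _ /and4P[_ _ /= /andP[_ /allP bV] _].
apply/subsetP=> x; rewrite inBset => /orP[/bV //|/bV /muV]; by rewrite muK.
Qed.

Lemma Bset_mu bl x : (mu x \in Bset bl) = (x \in Bset bl).
Proof. by rewrite !inBset muK orbC. Qed.

Lemma BP_in V E a bl w : PM V E -> blos V E a bl -> w \in Bset bl ->
  exists p, [/\ UQ (w :: p), all (mem (Bset bl)) (w :: p) & path (Rr E) w (rcons p (mu a))].
Proof.
move=> pm bb; rewrite inBset => /orP[wb|mwb].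
  have [p [u sub pa]] := BP_in0 bb wb; exists p; split=> //.
  by apply/allP=> x /sub xb; change (x \in Bset bl); rewrite inBset xb.
have bb' := blos_rev pm bb.
have wb : w \in map mu (rev bl) by apply/mapP; exists (mu w); rewrite ?mem_rev ?muK.
have [p [u sub pa]] := BP_in0 bb' wb; exists p; split=> //.
apply/allP=> x /sub /mapP[y]; rewrite mem_rev => yb ->.
by change (mu y \in Bset bl); rewrite inBset muK yb orbT.
Qed.

Lemma blos_adj V E a bl w : PM V E -> blos V E a bl -> w \in Bset bl -> E a w ->
  exists s, altc V E s.
Proof.
move=> pm bb wB Eaw; have [p [uq al pa]] := BP_in pm bb wB.
have /andP[aB maB] := Bset_notin bb.
have BV := Bset_V pm bb.
case: pm => sym _ muV _.
exists (w :: rcons p (mu a)); apply/and4P; split.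
- by rewrite /= size_rcons.
- rewrite -rcons_cons UQ_rcons uq muK andbT; apply/andP; split.
  + by apply/negP=> /(allP al) H; have : mu a \in Bset bl := H; rewrite (negbTE maB).
  + by apply/negP=> /(allP al) H; have : a \in Bset bl := H; rewrite (negbTE aB).
- rewrite -rcons_cons all_rcons; apply/andP; split.
  + apply: muV; move: bb => /and4P[_ _ /= /andP[] //].
  + apply/allP=> x /(allP al) xB; exact: (subsetP BV x xB).
- by rewrite /= rcons_path pa last_rcons /Rr muK.
Qed.


Lemma sub_path2 (e e' : rel U) (P Q : pred U) x t :
  (forall x y, P x -> Q y -> e x y -> e' x y) -> P x -> all P t -> all Q t ->
  path e x t -> path e' x t.
Proof.
move=> H; elim: t x => [//|y t IH] x Px /= /andP[Py Pt] /andP[Qy Qt] /andP[exy pt].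
by rewrite (H _ _ Px Qy exy) (IH y Py Pt Qt pt).
Qed.

Section Contract.
Variables (V : {set U}) (E : rel U) (a : U) (bl : seq U).
Hypothesis pm : PM V E.
Hypothesis bb : blos V E a bl.

Local Notation B := (Bset bl).
Definition rr (x : U) : U := if x \in B then mu a else x.
Definition V2 := V :\: B.
Definition E2 : rel U := fun y z => (y != z) &&
  [exists u, [exists w, [&& u \in V, w \in V, rr u == y, rr w == z & E u w]]].

Lemma rr_nB x : x \notin B -> rr x = x.
Proof. by move=> h; rewrite /rr; case: ifP => // h'; move/negP: h; case; exact h'. Qed.

Lemma rr_B x : x \in B -> rr x = mu a.
Proof. by move=> h; rewrite /rr; case: ifP => // /negP; case; exact h. Qed.

Lemma aB : a \notin B. Proof. by case/andP: (Bset_notin bb). Qed.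
Lemma maB : mu a \notin B. Proof. by case/andP: (Bset_notin bb). Qed.
Lemma aV : a \in V. Proof. by case/and4P: bb => _ _ /= /andP[]. Qed.
Lemma maV : mu a \in V. Proof. by case: pm => _ _ muV _; apply/muV/aV. Qed.

Lemma rr_V2 x : x \in V -> rr x \in V2.
Proof.
rewrite /rr /V2; case: ifP => xB xV; rewrite inE ?xB ?xV //.
by rewrite (negbTE maB) maV.
Qed.

Lemma rr_inv u y : rr u = y -> y != mu a -> u = y.
Proof.
case: (boolP (u \in B)) => uB; first by rewrite rr_B // => <-; rewrite eqxx.
by rewrite rr_nB.
Qed.

Lemma V2V : V2 \subset V.
Proof. by rewrite /V2 subsetDl. Qed.

Lemma PM2 : PM V2 E2.
Proof.
case: pm => sym irr muV muE; split.
- move=> x y; rewrite /E2 eq_sym; congr (_ && _).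
  apply/existsP/existsP=> [[u /existsP[w /and5P[uV wV ru rw E']]]|[u /existsP[w /and5P[uV wV ru rw E']]]];
    exists w; apply/existsP; exists u; by rewrite uV wV ru rw sym.
- by move=> x; rewrite /E2 eqxx.
- move=> x; rewrite /V2 !in_setD Bset_mu => /andP[-> /muV ->] //.
- move=> x; rewrite /V2 in_setD => /andP[xB xV]; rewrite /E2 eq_sym mu_nfix /=.
  apply/existsP; exists x; apply/existsP; exists (mu x).
  by rewrite xV muV // muE // rr_nB // rr_nB ?Bset_mu // !eqxx.
Qed.

Lemma V2_lt : #|V2| < #|V|.
Proof.
case/and4P: bb => ne _ /= /andP[_ /allP bV] _.
rewrite /V2 -(cardsID B V) -[X in X < _]add0n ltn_add2r card_gt0.
case: bl ne bV => [//|z t] _ bV.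
apply/set0Pn; exists z; rewrite in_setI; apply/andP; split; [exact: (bV z (mem_head _ _)) | by rewrite inBset mem_head].
Qed.

Lemma aV2 : a \in V2.
Proof. by rewrite /V2 in_setD aB aV. Qed.

Lemma E2_E y z : y != mu a -> z != mu a -> E2 y z -> E y z.
Proof.
move=> ya za /andP[_ /existsP[u /existsP[w /and5P[_ _ /eqP ru /eqP rw Euw]]]].
by rewrite -(rr_inv ru ya) -(rr_inv rw za).
Qed.

Lemma altc_lift s : (forall s, ~~ altc V E s) -> ~~ altc V2 E2 s.
Proof.
move=> nalt; apply/negP.
have pm2 := PM2.
case: pm => sym irr muV muE.
suff H : forall s, altc V2 E2 s -> a \notin s -> False.
  case: (boolP (a \in s)) => [as_|nas] A; last exact: (H s A nas).
  apply: (H _ (altc_rev pm2 A)); apply/mapP=> [[x]]; rewrite mem_rev => xs ax.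
  case/and4P: A => _ /andP[_ /allP al] _ _; have := al _ as_.
  by rewrite ax muK xs.
move=> {}s A nas.
have sV2 : forall x, x \in s -> x \in V2 by case/and4P: A => _ _ /allP.
have sV : forall x, x \in s -> x \in V by move=> x /sV2; apply/subsetP/V2V.
case: (boolP (mu a \in s)) => [mas|nmas].
- case: (rot_to mas) => i t Erot.
  have A' : altc V2 E2 (mu a :: t) by rewrite -Erot altc_rot.
  case/and4P: A' => sz uq al cy.
  have tin : forall x, x \in t -> x \in s by move=> x xt; rewrite -(mem_rot i) Erot inE xt orbT.
  have ta : forall x, x \in t -> x != a by move=> x /tin xs; apply/eqP=> e; move: nas; rewrite -e xs.
  have tma : forall x, x \in t -> x != mu a.
    move=> x xt; apply/eqP=> e; move: uq; rewrite UQ_cons => /andP[]; by rewrite -e xt.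
  move: cy; rewrite /= rcons_path => /andP[pt lt].
  have pR : path (Rr E) (mu a) t.
    apply: (sub_path2 (P := fun x => x != a) (Q := fun x => x != mu a) _ _ _ _ pt).
    + move=> x y xa yma; rewrite /Rr; apply: E2_E => //.
      by apply/eqP=> e; move: xa; rewrite -(muK x) e muK eqxx.
    + exact: mu_nfix.
    + by apply/allP=> x /ta.
    + by apply/allP=> x /tma.
  have tne : t != [::] by case: (t) sz.
  set l := last (mu a) t in lt.
  have lt_ : l \in t by rewrite /l; case: (t) tne => [//|z t'] _ /=; exact: mem_last.
  move: lt; rewrite /Rr /E2 => /andP[_ /existsP[u /existsP[w /and5P[uV wV /eqP ru /eqP rw Euw]]]].
  have ul : u = mu l.
    apply: rr_inv ru _; apply/eqP=> e; have := ta _ lt_; by rewrite -(muK l) e muK eqxx.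
  subst u.
  case: (boolP (w \in B)) => wB.
  + have [p [uqp alp pp]] := BP_in pm bb wB.
    apply: (negP (nalt (w :: p ++ mu a :: t))); apply/and4P; split.
    * by rewrite /= size_cat /= addnS.
    * rewrite -cat_cons; apply: UQ_cat => // x xp.
      have xB : x \in B := allP alp x xp.
      have mxB : mu x \in B by rewrite Bset_mu.
      apply/andP; split; apply/negP=> xin.
      - by have : x \in V2 := allP al _ xin; rewrite /V2 in_setD xB.
      - by have : mu x \in V2 := allP al _ xin; rewrite /V2 in_setD mxB.
    * rewrite -cat_cons all_cat; apply/andP; split.
      - apply/allP=> x /(allP alp) xB; exact: (subsetP (Bset_V pm bb) x xB).
      - apply/allP=> x /(allP al) xV2; exact: (subsetP V2V x xV2).
    * move: pp; rewrite rcons_path => /andP[h1 h2].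
      by rewrite /= rcons_cat cat_path h1 /= h2 rcons_path pR /Rr Euw.
  + have wma : w = mu a by move: rw; rewrite rr_nB.
    subst w.
    apply: (negP (nalt (mu a :: t))); apply/and4P; split=> //.
    * apply/allP=> x /(allP al) xV2; exact: (subsetP V2V x xV2).
    * by rewrite /= rcons_path pR /Rr Euw.
- apply: (negP (nalt s)); case/and4P: A => sz uq al cy; apply/and4P; split=> //.
  + apply/allP=> x /sV //.
  + apply: (sub_in_cycle _ (allss s) cy) => x y xs ys; rewrite /Rr; apply: E2_E.
    * by apply/eqP=> e; move: nas; rewrite -(muK a) -e muK xs.
    * by apply/eqP=> e; move: nmas; rewrite -e ys.
Qed.

Lemma bridge_lift y A2 : (forall s, ~~ altc V E s) -> bridge V2 E2 y A2 ->
  bridge V E y [set u in V | rr u \in A2].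
Proof.
move=> nalt [yA2 A2sub myA2 cross].
have yV2 : y \in V2 := subsetP A2sub y yA2.
move: (yV2); rewrite /V2 in_setD => /andP[yB yV].
have pm' := pm; case: pm' => sym irr muV muE.
split.
- by rewrite inE yV rr_nB.
- by apply/subsetP=> u; rewrite inE => /andP[].
- by rewrite inE rr_nB ?Bset_mu // (negbTE myA2) andbF.
move=> u w; rewrite !inE => /andP[uV ruA] wV; rewrite wV /= => rwA Euw.
have ne : rr u != rr w by apply/eqP=> e; move: rwA; rewrite -e ruA.
have E2uw : E2 (rr u) (rr w).
  rewrite /E2 ne /=; apply/existsP; exists u; apply/existsP; exists w.
  by rewrite uV wV Euw !eqxx.
have [ru rw] := cross _ _ ruA (rr_V2 wV) rwA E2uw.
have uy : u = y.
  case: (boolP (u \in B)) => uB; last by rewrite -ru rr_nB.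
  exfalso; move: ru; rewrite rr_B // => ya.
  have wa : w = a.
    case: (boolP (w \in B)) => wB.
      by move: rw; rewrite rr_B // -ya muK => e; move: (mu_nfix a); rewrite e eqxx.
    by move: rw; rewrite rr_nB // -ya muK.
  subst w; have [s A] := blos_adj pm bb uB (etrans (sym _ _) Euw).
  by move: (nalt s); rewrite A.
split=> //.
case: (boolP (w \in B)) => wB; last by rewrite -rw rr_nB.
exfalso; move: rw; rewrite rr_B // => e.
have ya : y = a by rewrite -(muK y) -e muK.
subst u; subst y.
have [s A] := blos_adj pm bb wB Euw.
by move: (nalt s); rewrite A.
Qed.

End Contract.

Lemma path_f (V : {set U}) (E : rel U) (f : U -> U) :
  (forall x, x \in V -> (f x \in V) && E (mu x) (f x)) ->
  forall n y, y \in V -> path (Rr E) y (traject f (f y) n).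
Proof.
move=> hf; elim=> [//|n IH] y yV /=.
by case/andP: (hf y yV) => fV h; apply/andP; split; [exact: h | exact: IH].
Qed.

Lemma UQ_traject (f : U -> U) x0 n :
  (forall j, j < n -> ~~ ((iter j f x0 \in traject f x0 j) || (mu (iter j f x0) \in traject f x0 j))) ->
  UQ (traject f x0 n).
Proof.
elim: n => [_ //|n IH] H.
rewrite trajectSr UQ_rcons IH; last by move=> j jn; apply: H; rewrite ltnS ltnW.
by have := H n (ltnSn n); rewrite negb_or => /andP[-> ->].
Qed.

Lemma walk_blossom (V : {set U}) (E : rel U) x0 : PM V E -> (forall s, ~~ altc V E s) ->
  (forall x, x \in V -> [exists w, [&& w \in V, E (mu x) w & w != x]]) -> x0 \in V ->
  exists a bl, blos V E a bl.
Proof.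
move=> pm nalt hex x0V.
have pm' := pm; case: pm' => sym irr muV muE.
pose f x := odflt x [pick w | [&& w \in V, E (mu x) w & w != x]].
have hf : forall x, x \in V -> [&& f x \in V, E (mu x) (f x) & f x != x].
  move=> x xV; rewrite /f; case: pickP => [w //|none].
  by have /existsP[w] := hex x xV; rewrite none.
have hf' : forall x, x \in V -> (f x \in V) && E (mu x) (f x).
  by move=> x /hf /and3P[-> ->].
have itV : forall k, iter k f x0 \in V.
  by elim=> [//|k IH] /=; case/and3P: (hf _ IH).
pose Q j := (iter j f x0 \in traject f x0 j) || (mu (iter j f x0) \in traject f x0 j).
have exQ : exists j, Q j.
  case: (boolP [exists j : 'I_#|V|.+1, Q j]) => [/existsP[j Qj]|/existsPn H]; first by exists j.
  exfalso.
  have uq := UQ_traject (n := #|V|.+1) (fun j jl => H (Ordinal jl)).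
  have u : uniq (traject f x0 #|V|.+1) by case/andP: uq.
  have sub : {subset traject f x0 #|V|.+1 <= enum V}.
    by move=> x /trajectP[k _ ->]; rewrite mem_enum.
  by have := uniq_leq_size u sub; rewrite size_traject -cardE ltnn.
case: (ex_minnP exQ) => j Qj jmin.
have uqs : UQ (traject f x0 j).
  apply: UQ_traject => k kj; apply/negP=> Qk; have := jmin k Qk; by rewrite leqNgt kj.
have trV : forall x, x \in traject f x0 j -> x \in V by move=> x /trajectP[k _ ->].
have key : forall i, i < j -> drop i (traject f x0 j) = traject f (iter i f x0) (j - i).
  move=> i ij; rewrite -{1}(subnKC (ltnW ij)) trajectD drop_size_cat //.
  by rewrite size_traject.
have iterj : forall i, i < j -> iter (j - i) f (iter i f x0) = iter j f x0.
  by move=> i ij; rewrite -iterD subnK // ltnW.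
have uqd : forall i, UQ (drop i (traject f x0 j)).
  move=> i; apply: (UQ_sub _ _ uqs); first by rewrite drop_uniq //; case/andP: uqs.
  by move=> x /mem_drop.
have alld : forall i, all (mem V) (drop i (traject f x0 j)).
  by move=> i; apply/allP=> x /mem_drop /trV.
move: Qj; rewrite /Q => /orP[xin|mxin].
- exfalso; set i := index (iter j f x0) (traject f x0 j).
  have ij : i < j by rewrite -(size_traject f x0 j) index_mem.
  have nthi : iter i f x0 = iter j f x0.
    by rewrite -(nth_traject f ij) nth_index.
  have ij2 : i.+1 < j.
    rewrite ltn_neqAle ij andbT; apply/eqP=> e.
    have := hf _ (itV i); rewrite -iterS e -nthi eqxx.
    by case/and3P.
  apply: (negP (nalt (drop i (traject f x0 j)))); apply/and4P; split.
  + by rewrite size_drop size_traject ltn_subRL addn1.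
  + exact: uqd.
  + exact: alld.
  + rewrite key //; move: (iterj i ij).
    have : 0 < j - i by rewrite subn_gt0.
    case: (j - i) => [//|m] _ /=; rewrite nthi => Hm.
    move: (iter j f x0) (itV j) Hm => y yV Hm.
    rewrite -{3}Hm -iterS iterSr -trajectSr; exact: (path_f hf').
- set i := index (mu (iter j f x0)) (traject f x0 j).
  have ij : i < j by rewrite -(size_traject f x0 j) index_mem.
  have nthi : iter i f x0 = mu (iter j f x0).
    by rewrite -(nth_traject f ij) nth_index.
  have ij2 : i.+1 < j.
    rewrite ltn_neqAle ij andbT; apply/eqP=> e.
    have := hf _ (itV i); rewrite -iterS e nthi muK.
    by case/and3P=> _; rewrite (negbTE (irr _)).
  exists (iter i f x0), (traject f (f (iter i f x0)) (j - i).-1).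
  have e1 : iter i f x0 :: traject f (f (iter i f x0)) (j - i).-1 = drop i (traject f x0 j).
    rewrite key //; have : 0 < j - i by rewrite subn_gt0.
    by case: (j - i).
  apply/and4P; split.
  + have : 1 < j - i by rewrite ltn_subRL addn1.
    by case: (j - i) => [|[|m]].
  + by rewrite e1.
  + by rewrite e1.
  + have hm : iter (j - i).-1 f (f (iter i f x0)) = mu (iter i f x0).
      rewrite -iterSr prednK ?subn_gt0 // iterj // nthi muK //.
    rewrite -hm -trajectSr; exact: (path_f hf' _ (itV i)).
Qed.

Theorem kotzig (V : {set U}) (E : rel U) : PM V E -> V != set0 ->
  (forall s, ~~ altc V E s) -> exists y A, bridge V E y A.
Proof.
have [n] := ubnP #|V|; elim: n V E => // n IH V E ltV pm ne nalt.
have pm' := pm; case: pm' => sym irr muV muE.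
case: (boolP [exists y in V, [forall w in V, E (mu y) w ==> (w == y)]]).
  case/exists_inP=> y yV /forall_inP H.
  exists (mu y), [set mu y]; split.
  - by rewrite inE.
  - by rewrite sub1set muV.
  - by rewrite inE muK eq_sym mu_nfix.
  - move=> u w; rewrite inE => /eqP -> wV _ Ew; split=> //.
    by have := H w wV; rewrite Ew /= => /eqP ->; rewrite muK.
move=> nopend.
have hex : forall x, x \in V -> [exists w, [&& w \in V, E (mu x) w & w != x]].
  move=> x xV; move/exists_inP: nopend => nop.
  case: (boolP [exists w, [&& w \in V, E (mu x) w & w != x]]) => // /existsPn hw.
  exfalso; apply: nop; exists x => //; apply/forall_inP=> w wV.
  by have := hw w; rewrite wV /= negb_and negbK; case/orP=> h; [rewrite (negbTE h) | rewrite h implybT].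
case/set0Pn: ne => x0 x0V.
have [a [bl bb]] := walk_blossom pm nalt hex x0V.
have pm2 := PM2 a bl pm.
have lt2 : #|V2 V bl| < n := leq_trans (V2_lt bb) ltV.
have ne2 : V2 V bl != set0 by apply/set0Pn; exists a; exact: aV2 bb.
have [y [A2 br]] := IH _ _ lt2 pm2 ne2 (fun s => altc_lift pm bb s nalt).
by exists y, [set u in V | rr a bl u \in A2]; apply: bridge_lift.
Qed.

End Kotzig.


Lemma cycle_nthP (T : eqType) (e : rel T) x0 s : cycle e s ->
  forall i, i < size s -> e (nth x0 s i) (nth x0 s (i.+1 %% size s)).
Proof.
case: s => [//|x t] /= /(pathP x0) H i ilt.
have := H i; rewrite size_rcons => /(_ ilt).
have -> : nth x0 (x :: rcons t x) i = nth x0 (x :: t) i.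
  by rewrite -rcons_cons nth_rcons /= ilt.
rewrite nth_rcons; case: ltnP => it.
  by rewrite modn_small //.
have -> : i = size t by apply/eqP; rewrite eqn_leq it -ltnS ilt.
by rewrite eqxx modnn.
Qed.

Section G.
Variable T : finType.
Variables red blue : rel T.
Hypothesis tec : two_edge_coloured red blue.

Definition mu2 (p : T * bool) : T * bool := (p.1, ~~ p.2).
Definition E2' : rel (T * bool) := fun p q =>
  if p.1 == q.1 then p.2 != q.2 else (p.2 == q.2) && colrel red blue p.2 p.1 q.1.

Lemma mu2K : involutive mu2.
Proof. by case=> x b; rewrite /mu2 /= negbK. Qed.

Lemma mu2_nfix p : mu2 p != p.
Proof. by case: p => x b; rewrite /mu2 /= xpair_eqE eqxx /=; case: b. Qed.

Lemma colrel_sym c x y : colrel red blue c x y = colrel red blue c y x.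
Proof. by case: tec => sr sb _ _ _; case: c; rewrite /colrel. Qed.

Lemma colrel_irr c x : colrel red blue c x x = false.
Proof. by case: tec => _ _ ir ib _; case: c; rewrite /colrel ?ir ?ib. Qed.

Lemma step2 x y : Rr mu2 E2' x y -> y != x -> y != mu2 x ->
  [/\ x.1 != y.1, y.2 = ~~ x.2 & colrel red blue y.2 x.1 y.1].
Proof.
case: x y => [x b] [y c]; rewrite /Rr /E2' /mu2 /=.
case: eqP => [-> | nxy].
  by case: b; case: c => //=; rewrite eqxx.
by case/andP=> /eqP <- cr _ _; split=> //; apply/eqP.
Qed.

Lemma alt_transfer (V : {set T * bool}) s : altc mu2 V E2' s -> has_alternating_cycle red blue.
Proof.
case/and4P=> sz /andP[us /allP nmu] _ cy.
set k := size s in sz.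
have Hst : forall x0 i, i < k ->
  [/\ (nth x0 s i).1 != (nth x0 s (i.+1 %% k)).1,
      (nth x0 s (i.+1 %% k)).2 = ~~ (nth x0 s i).2 &
      colrel red blue (nth x0 s (i.+1 %% k)).2 (nth x0 s i).1 (nth x0 s (i.+1 %% k)).1].
  move=> x0 i ik; have k0 : 0 < k by lia.
  have jk : i.+1 %% k < k by rewrite ltn_mod.
  apply: step2; first exact: cycle_nthP.
  - rewrite nth_uniq //.
    apply/eqP=> e; move: sz; rewrite -/k.
    case: (ltnP i.+1 k) => h.
      by move: e; rewrite modn_small //; lia.
    have ek : i.+1 = k by apply/eqP; rewrite eqn_leq h ik.
    by move: e; rewrite -ek modnn; lia.
  - apply/eqP=> e; have := nmu _ (mem_nth x0 ik); rewrite -e mem_nth //.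
have inj : {in s &, injective fst}.
  move=> [x b] [y c] xs ys /= exy; subst y; case: (eqVneq b c) => [-> //|bc].
  have := nmu _ xs; rewrite /mu2 /=.
  have e : ~~ b = c by move: bc; clear; case: b; case: c.
  by rewrite e ys.
exists (map fst s).
move: Hst sz; rewrite /k; clear k => Hst sz.
case: s us nmu cy Hst inj sz => [//|p t] us nmu cy Hst inj sz.
set k := size (p :: t) in Hst sz *.
rewrite /alternating_cycle size_map; split.
- case: (ltnP 2 k) => // k2; exfalso.
  have ek : k = 2 by lia.
  have l0 : 0 < k by rewrite ek.
  have l1 : 1 < k by rewrite ek.
  have [_ h2 h3] := Hst p 0 l0.
  have [_ _ h6] := Hst p 1 l1.
  move: h2 h3 h6; rewrite ek /= => h2 h3 h6.
  rewrite colrel_sym in h6; rewrite h2 in h3.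
  case: tec => _ _ _ _ /(_ p.1 (nth p t 0).1).
  by move: h3 h6; case: (p.2); rewrite /colrel /= => -> ->.
- by rewrite map_inj_in_uniq.
- move=> i ik.
  have k0 : 0 < k by lia.
  rewrite !(nth_map p) ?ltn_mod //.
  have [_ e1 c1] := Hst p i ik.
  have jk : i.+1 %% k < k by rewrite ltn_mod (ltn_trans _ sz).
  have [_ e2 c2] := Hst p _ jk.
  have -> : (i + 2) %% k = (i.+1 %% k).+1 %% k.
    by rewrite -[(i.+1 %% k).+1]addn1 modnDml addn1 addn2.
  have -> : (i + 1) %% k = i.+1 %% k by rewrite addn1.
  move: c1 c2; rewrite e2.
  by case: ((nth p (p :: t) (i.+1 %% k)).2); rewrite /colrel /= => -> ->; rewrite ?orbT.
Qed.


Lemma bridge_swap (U : finType) (mu : U -> U) (V : {set U}) (E : rel U) y A :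
  involutive mu -> PM mu V E -> bridge mu V E y A -> bridge mu V E (mu y) (V :\: A).
Proof.
move=> muK [sym _ muV _] [yA AV myA cross].
have yV : y \in V := subsetP AV y yA.
split.
- by rewrite in_setD myA muV.
- exact: subsetDl.
- by rewrite in_setD muK yA.
- move=> u w; rewrite in_setD => /andP[uA uV] wV; rewrite in_setD wV andbT negbK => wA Euw.
  have [-> ->] := cross w u wA uV uA (etrans (sym _ _) Euw).
  by rewrite muK.
Qed.

Definition VS (S : {set T}) := [set p : T * bool | p.1 \in S].

Lemma PM_S S : PM mu2 (VS S) E2'.
Proof.
split.
- move=> [x b] [y c]; rewrite /E2' /=.
  case: (x =P y) => [->|/eqP xy]; first by rewrite eqxx eq_sym.
  rewrite [y == x]eq_sym (negbTE xy) /= [c == b]eq_sym.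
  case: eqP => //= ->; exact: colrel_sym.
- by move=> [x b]; rewrite /E2' /= !eqxx.
- by move=> [x b]; rewrite !inE.
- by move=> [x b] _; rewrite /E2' /mu2 /= eqxx; case: b.
Qed.

Hypothesis nocyc : ~ has_alternating_cycle red blue.

Lemma altfree_S S : forall s, ~~ altc mu2 (VS S) E2' s.
Proof. by move=> s; apply/negP=> /alt_transfer. Qed.

Section Side.
Variable S : {set T}.
Variables (y : T * bool) (A : {set T * bool}).
Hypothesis br : bridge mu2 (VS S) E2' y A.

Definition SA := [set v in S | (v != y.1) && ((v, true) \in A)].

Lemma side_cross u w : u \in A -> w \in VS S -> w \notin A -> E2' u w -> u.1 = y.1.
Proof. by case: br => _ _ _ cross h1 h2 h3 h4; have [-> _] := cross _ _ h1 h2 h3 h4. Qed.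

Lemma side_e v b : v \in S -> v != y.1 -> ((v, b) \in A) = ((v, true) \in A).
Proof.
move=> vS vy; case: b => //.
have AV : A \subset VS S by case: br.
have vV : forall b, (v, b) \in VS S by move=> b; rewrite inE.
apply/idP/idP=> h.
  apply/negPn/negP=> h'.
  have := side_cross h (vV true) h'; rewrite /E2' /= eqxx /= => /(_ isT) e.
  by move: vy; rewrite -e eqxx.
apply/negPn/negP=> h'.
have := side_cross h (vV false) h'; rewrite /E2' /= eqxx /= => /(_ isT) e.
by move: vy; rewrite -e eqxx.
Qed.

Lemma side_props :
  [/\ y.1 \in S, SA \subset S :\ y.1,
      forall w, w \in S -> colrel red blue y.2 y.1 w -> w \in SA &
      forall v c w, v \in SA -> w \in S -> colrel red blue c v w -> (w \in SA) || (w == y.1)].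
Proof.
have [yA AV myA cross] := br.
have yS : y.1 \in S by have := subsetP AV y yA; rewrite inE.
split=> //.
- by apply/subsetP=> v; rewrite !inE => /and3P[-> -> _].
- move=> w wS cw.
  have wy : w != y.1 by apply/eqP=> e; move: cw; rewrite e colrel_irr.
  rewrite inE wS wy /= -(side_e y.2) //.
  apply/negPn/negP=> h.
  have wV : (w, y.2) \in VS S by rewrite inE.
  have Ey : E2' y (w, y.2) by rewrite /E2' /= eq_sym (negbTE wy) eqxx.
  have [_ e] := cross _ _ yA wV h Ey.
  have := congr1 fst e; rewrite /mu2 /= => ew.
  by move: wy; rewrite ew eqxx.
- move=> v c w; rewrite inE => /and3P[vS vy vA] wS cvw.
  case: (eqVneq w y.1) => [_|wy]; first by rewrite orbT.
  have vw : v != w by apply/eqP=> e; move: cvw; rewrite e colrel_irr.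
  rewrite inE wS wy /= orbF -(side_e c) //.
  apply/negPn/negP=> h.
  have vcA : (v, c) \in A by rewrite side_e.
  have wV : (w, c) \in VS S by rewrite inE.
  have Ev : E2' (v, c) (w, c) by rewrite /E2' /= (negbTE vw) eqxx.
  have [e _] := cross _ _ vcA wV h Ev.
  by move: vy; rewrite -e eqxx.
Qed.

End Side.

Lemma split_S (S : {set T}) : S != set0 ->
  exists z b (S1 : {set T}), [/\ z \in S, S1 \subset S :\ z, (2 * #|S1|) < #|S|,
    forall w, w \in S -> colrel red blue b z w -> w \in S1 &
    forall v c w, v \in S1 -> w \in S -> colrel red blue c v w -> (w \in S1) || (w == z)].
Proof.
move=> ne.
have neV : VS S != set0.
  by case/set0Pn: ne => x xS; apply/set0Pn; exists (x, true); rewrite inE.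
have [y [A br]] := kotzig mu2K mu2_nfix (PM_S S) neV (altfree_S S).
have br' := bridge_swap mu2K (PM_S S) br.
have [yS sA P1 P2] := side_props br.
have [_ sB Q1 Q2] := side_props br'.
have cover : forall v, v \in S :\ y.1 -> (v \in SA S y A) || (v \in SA S (mu2 y) (VS S :\: A)).
  move=> v; rewrite in_setD1 => /andP[vy vS]; rewrite !inE /mu2 /= vS vy /=.
  by case: ((v, true) \in A).
have disj : [disjoint SA S y A & SA S (mu2 y) (VS S :\: A)].
  apply/pred0P=> v /=; rewrite !inE /mu2 /=.
  by case: ((v, true) \in A); rewrite !andbF.
have card : #|SA S y A| + #|SA S (mu2 y) (VS S :\: A)| = #|S|.-1.
  rewrite -cardsUI.
  have -> : SA S y A :&: SA S (mu2 y) (VS S :\: A) = set0.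
    by apply/setP=> v; rewrite inE in_set0; apply/negP=> /andP[h1 h2];
       move/pred0P: disj => /(_ v) /=; rewrite h1 h2.
  rewrite cards0 addn0 (cardsD1 y.1 S) yS add1n /=.
  suff -> : SA S y A :|: SA S (mu2 y) (VS S :\: A) = S :\ y.1 by [].
  apply/setP=> v; rewrite in_setU.
  apply/idP/idP=> [/orP[h|h]|h]; first by apply: (subsetP sA).
    by apply: (subsetP sB).
  exact: cover.
case: (ltnP (2 * #|SA S y A|) #|S|) => h.
  by exists y.1, y.2, (SA S y A); split.
exists y.1, (mu2 y).2, (SA S (mu2 y) (VS S :\: A)); split=> //.
have : 0 < #|S| by rewrite card_gt0.
lia.
Qed.

Lemma degree_lemma (S : {set T}) : S != set0 ->
  exists v b, v \in S /\ 2 * 2 ^ #|[set w in S | colrel red blue b v w]| <= #|S| + 1.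
Proof.
have [n] := ubnP #|S|; elim: n S => // n IH S ltS ne.
have [z [b [S1 [zS sub lt P1 P2]]]] := split_S ne.
case: (eqVneq S1 set0) => [S10|ne1].
  exists z, b; split=> //.
  have -> : [set w in S | colrel red blue b z w] = set0.
    apply/setP=> w; rewrite inE in_set0; apply/negP=> /andP[wS cw].
    by have := P1 w wS cw; rewrite S10 in_set0.
  rewrite cards0 expn0 muln1 addn1 ltnS card_gt0 //.
have lt1 : #|S1| < n.
  have : #|S1| < #|S|.
    by apply: (leq_ltn_trans (subset_leq_card sub)); rewrite (cardsD1 z S) zS.
  by move=> h; apply: leq_trans h _.
have [v [c [vS1 H]]] := IH S1 lt1 ne1.
have vS : v \in S by have := subsetP sub v vS1; rewrite in_setD1 => /andP[].
exists v, c; split=> //.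
have hsub : [set w in S | colrel red blue c v w] \subset [set w in S1 | colrel red blue c v w] :|: [set z].
  apply/subsetP=> w; rewrite !inE => /andP[wS cw].
  by have := P2 v c w vS1 wS cw; case/orP=> [->|->]; rewrite ?cw ?orbT.
have hd : #|[set w in S | colrel red blue c v w]| <= #|[set w in S1 | colrel red blue c v w]|.+1.
  apply: leq_trans (subset_leq_card hsub) _.
  by rewrite -addn1; apply: leq_trans (leq_card_setU _ _) _; rewrite cards1.
have : 2 ^ #|[set w in S | colrel red blue c v w]| <= 2 * 2 ^ #|[set w in S1 | colrel red blue c v w]|.
  by rewrite -expnS leq_pexp2l.
move: H lt; set X := 2 ^ _; set Y := 2 ^ _; lia.
Qed.

End G.


Section Final.
Variable T : finType.
Variables red blue : rel T.
Hypothesis tec : two_edge_coloured red blue.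
Hypothesis nocyc : ~ has_alternating_cycle red blue.
Hypothesis n2 : 2 <= #|T|.

Lemma order_ex (S : {set T}) : exists s : seq T, [/\ uniq s, s =i S &
  forall x0 i, i < size s -> exists b,
    2 ^ #|[set w | (w \in drop i.+1 s) && colrel red blue b (nth x0 s i) w]| < #|T|].
Proof.
have [n] := ubnP #|S|; elim: n S => // n IH S ltS.
case: (eqVneq S set0) => [->|ne].
  by exists [::]; split=> // x; rewrite in_set0.
have [v [b [vS H]]] := degree_lemma tec nocyc ne.
have lt' : #|S :\ v| < n.
  by move: ltS; rewrite (cardsD1 v S) vS add1n ltnS.
have [s' [us' eqs' P']] := IH _ lt'.
exists (v :: s'); split.
- by rewrite /= us' andbT eqs' in_setD1 eqxx.
- by move=> x; rewrite inE eqs' in_setD1; case: (eqVneq x v) => [->|] //=.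
- move=> x0 [|i] /=.
    move=> _; exists b.
    have sub : [set w | (w \in s') && colrel red blue b v w] \subset [set w in S | colrel red blue b v w].
      apply/subsetP=> w; rewrite !inE eqs' in_setD1 => /andP[/andP[_ ->] ->] //.
    have h1 := subset_leq_card sub.
    have h2 : 2 ^ #|[set w | (w \in s') && colrel red blue b v w]| <= 2 ^ #|[set w in S | colrel red blue b v w]|.
      by apply: leq_pexp2l.
    have h3 : #|S| <= #|T| by apply: max_card.
    rewrite drop0; move: H h2 h3 n2; set X := 2 ^ _; set Y := 2 ^ _; clearbody X Y; move: #|T| #|S| => NT NS; lia.
  by move=> ilt; apply: P'.
Qed.

End Final.

Theorem mainTheorem3 (T : finType) (red blue : rel T) :
  two_edge_coloured red blue ->
  2 <= #|T| ->
  ~ has_alternating_cycle red blue ->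
  exists v : 'I_#|T| -> T,
    bijective v /\
    forall i : 'I_#|T|, exists c : bool,
      lt_log2 #|[set j : 'I_#|T| | (i < j) && colrel red blue c (v i) (v j)]| #|T|.
Proof.
move=> tec n2 nocyc.
have [s [us eqs P]] := order_ex tec nocyc n2 [set: T].
have sz : size s = #|T|.
  rewrite -(card_uniqP us); apply: eq_card => x; by rewrite eqs inE.
have /card_gt0P[x0 _] : 0 < #|T| by lia.
pose v (i : 'I_#|T|) := nth x0 s i.
have vinj : injective v.
  move=> i j /eqP; rewrite /v nth_uniq ?sz // => /eqP; exact: val_inj.
exists v; split.
  by apply: inj_card_bij; rewrite // card_ord.
move=> i; have ilt : i < size s by rewrite sz.
have [b H] := P x0 i ilt.
exists b; rewrite /lt_log2; apply: leq_ltn_trans H; apply: leq_pexp2l => //.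
rewrite -(card_imset _ vinj); apply: subset_leq_card; apply/subsetP=> w.
case/imsetP=> j; rewrite inE => /andP[ij cj] ->.
rewrite inE cj andbT /v.
have -> : nth x0 s j = nth x0 (drop i.+1 s) (j - i.+1) by rewrite nth_drop subnKC.
apply: mem_nth; rewrite size_drop sz; move: ij (ltn_ord j); move: (nat_of_ord j) (nat_of_ord i) => a c; lia.
Qed.
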